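(* Let $n\ge 2$ and let $C_n=\{a_0<a_1<\cdots<a_{n-1}\}$ be a chain with $a_0=0$, $a_{n-1}=1$, with $\wedge=\min$ and $\vee=\max$. Let $\to$ be a binary operation on $C_n$. Then $\langle C_n,\vee,\wedge,\to,0,1\rangle$ is a semi-Heyting algebra if and only if all of the following hold: (i) $\{a_1,\dots,a_{n-1}\}$ is closed under $\to$ and $\langle\{a_1,\dots,a_{n-1}\},\vee,\wedge,\to,a_1,1\rangle$ is a semi-Heyting algebra; (ii) $0\to 0=1$; (iii) $a_i\to 0=0$ for all $1\le i\le n-1$; (iv) there exists $j\in\{0,1,\dots,n-1\}$ such that $0\to a_h=a_j$ for every $h$ with $j<h\le n-1$, and $0\to a_h\ge a_h$ for every $h$ with $1\le h\le j$. Consequently, for a fixed semi-Heyting operation on $\{a_1,\dots,a_{n-1}\}$, the number of ways to extend it to a semi-Heyting operation on $C_n$ equals $\sum_{i=0}^{n-1}\frac{(n-1)!}{i!}$.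
   Context: A semi-Heyting algebra is an algebra $\langle L,\vee,\wedge,\to,0,1\rangle$ such that: (SH1) $\langle L,\vee,\wedge,0,1\rangle$ is a bounded lattice with least element $0$ and greatest element $1$; (SH2) $x\wedge(x\to y)=x\wedge y$; (SH3) $x\wedge(y\to z)=x\wedge[(x\wedge y)\to(x\wedge z)]$; (SH4) $x\to x=1$, for all $x,y,z\in L$. *)

(* Defs.v *)
From mathcomp Require Import all_boot.
Set Implicit Arguments. Unset Strict Implicit. Unset Printing Implicit Defensive.

(* The chain C_n = {a_0 < ... < a_{n-1}} is modelled as 'I_n, with a_k the
   ordinal of value k; the order is the natural order on values. *)
Definition elt (n : nat) (hn : 1 < n) (k : nat) : 'I_n :=
  Ordinal (ltn_pmod k (ltnW hn)).

Definition mn n (x y : 'I_n) : 'I_n := if (x <= y)%N then x else y.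
Definition mx n (x y : 'I_n) : 'I_n := if (x <= y)%N then y else x.

(* <S, max, min, imp, b, t> is a semi-Heyting algebra, where S is a subset of
   the chain 'I_n (automatically closed under min/max) with least element b
   and greatest element t.  (SH1) lattice part, closure of S under imp,
   (SH2), (SH3), (SH4). *)
Definition SH_on n (S : pred 'I_n) (b t : 'I_n) (imp : 'I_n -> 'I_n -> 'I_n) : bool :=
  [&& S b, S t, [forall x, S x ==> (b <= x <= t)%N],
   [forall x, forall y, S x && S y ==> S (imp x y)],
   [forall x, forall y, S x && S y ==> (mn x (imp x y) == mn x y)],
   [forall x, forall y, forall z, [&& S x, S y & S z] ==>
        (mn x (imp y z) == mn x (imp (mn x y) (mn x z)))] &
   [forall x, S x ==> (imp x x == t)]].

Definition pos_part n : pred 'I_n := fun x => (0 < x)%N.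

(* Main.v *)
Require Import Defs.
From mathcomp Require Import all_boot zify.

Set Implicit Arguments. Unset Strict Implicit.
Lemma val_mn n (x y : 'I_n) : (mn x y : nat) = minn x y.
Proof. by rewrite /mn /minn; do 2 case: ifP => //; lia. Qed.

Definition SHP n (S : pred 'I_n) (b t : 'I_n) (imp : 'I_n -> 'I_n -> 'I_n) :=
  S b /\ S t /\ (forall x, S x -> b <= x <= t) /\
     (forall x y, S x -> S y -> S (imp x y)) /\
     (forall x y, S x -> S y -> minn x (imp x y) = minn x y) /\
     (forall x y z, S x -> S y -> S z ->
        minn x (imp y z) = minn x (imp (mn x y) (mn x z))) /\
     (forall x, S x -> imp x x = t).

Lemma SH_onP n (S : pred 'I_n) (b t : 'I_n) (imp : 'I_n -> 'I_n -> 'I_n) : reflect (SHP S b t imp) (SH_on S b t imp).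
Proof.
apply: (iffP idP).
  case/and5P => Sb St /forallP H1 /forallP H2 /and3P[/forallP H3 /forallP H4 /forallP H5].
  do !split => //.
  - by move=> x Sx; have := H1 x; rewrite Sx.
  - by move=> x y Sx Sy; have := forallP (H2 x) y; rewrite Sx Sy.
  - move=> x y Sx Sy; have := forallP (H3 x) y; rewrite Sx Sy /=.
    by move/eqP/(congr1 val); rewrite /= !val_mn.
  - move=> x y z Sx Sy Sz; have := forallP (forallP (H4 x) y) z; rewrite Sx Sy Sz /=.
    by move/eqP/(congr1 val); rewrite /= !val_mn.
  - by move=> x Sx; have := H5 x; rewrite Sx => /eqP.
case=> Sb [St [H1 [H2 [H3 [H4 H5]]]]]; apply/and5P; split => //; last (apply/and3P; split).
- by apply/forallP => x; apply/implyP; apply: H1.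
- by apply/forallP => x; apply/forallP => y; apply/implyP => /andP[]; apply: H2.
- apply/forallP => x; apply/forallP => y; apply/implyP => /andP[Sx Sy].
  by rewrite -val_eqE /= !val_mn H3.
- apply/forallP => x; apply/forallP => y; apply/forallP => z.
  apply/implyP => /and3P[Sx Sy Sz].
  by rewrite -val_eqE /= !val_mn H4.
- by apply/forallP => x; apply/implyP => Sx; rewrite H5.
Qed.

Lemma ordE n (x y : 'I_n) : (x : nat) = (y : nat) -> x = y.
Proof. exact: val_inj. Qed.

Lemma ordO n (hn : 1 < n) (x : 'I_n) : (x : nat) = 0 -> x = elt hn 0.
Proof. by move=> h; apply/val_inj; rewrite /= mod0n. Qed.

Lemma part1 (n : nat) (hn : 1 < n) (imp : 'I_n -> 'I_n -> 'I_n) :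
    SH_on predT (elt hn 0) (elt hn n.-1) imp <->
    [/\ SH_on (pos_part (n:=n)) (elt hn 1) (elt hn n.-1) imp,
        imp (elt hn 0) (elt hn 0) = elt hn n.-1,
        (forall i : 'I_n, 1 <= i -> imp i (elt hn 0) = elt hn 0) &
        (exists j : 'I_n,
           (forall h : 'I_n, j < h -> imp (elt hn 0) h = j) /\
           (forall h : 'I_n, 1 <= h <= j -> h <= imp (elt hn 0) h))].
Proof.
have vO : (elt hn 0 : nat) = 0 by rewrite /= mod0n.
have vT : (elt hn n.-1 : nat) = n.-1 by rewrite /= modn_small //; lia.
have v1 : (elt hn 1 : nat) = 1 by rewrite /= modn_small.
have mnO : forall x, mn x (elt hn 0) = elt hn 0.
  by move=> x; apply: ordE; rewrite val_mn vO; lia.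
split.
  move/SH_onP => [_ [_ [_ [_ [H3 [H4 H5]]]]]].
  have Hi0 : forall i : 'I_n, 1 <= i -> imp i (elt hn 0) = elt hn 0.
    move=> i hi; apply: ordE; have := H3 i (elt hn 0) isT isT; rewrite vO; lia.
  have F : forall k h : 'I_n, k <= h ->
      minn k (imp (elt hn 0) h) = minn k (imp (elt hn 0) k).
    move=> k h kh; rewrite (H4 k (elt hn 0) h) // mnO.
    by congr (minn _ (imp _ _)); apply: ordE; rewrite val_mn; lia.
  split.
  - apply/SH_onP; do !split.
    + by rewrite /pos_part v1.
    + by rewrite /pos_part vT; lia.
    + by move=> x; rewrite /pos_part v1 vT => xp; have := ltn_ord x; lia.
    + by move=> x y; rewrite /pos_part => xp yp; have := H3 x y isT isT; lia.
    + by move=> x y _ _; exact: H3.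
    + by move=> x y z _ _ _; exact: H4.
    + by move=> x _; exact: H5.
  - exact: H5.
  - exact: Hi0.
  pose P := fun h : 'I_n => h <= imp (elt hn 0) h.
  have P0 : P (elt hn 0) by rewrite /P vO.
  case: (arg_maxnP (fun h : 'I_n => nat_of_ord h) P0) => j Pj jmax.
  rewrite /P in Pj.
  exists j; split.
    move=> h jh.
    have chj : j <= imp (elt hn 0) h by have := F j h (ltnW jh); lia.
    have chh : imp (elt hn 0) h < h.
      by rewrite ltnNge; apply/negP => Ph; have := jmax h Ph; lia.
    have : imp (elt hn 0) h <= j.
      by apply: jmax; rewrite /P; have := F (imp (elt hn 0) h) h (ltnW chh); lia.
    by move=> hle; apply: ordE; lia.
  by move=> h /andP[h1 hj]; have := F h j hj; lia.
case=> /SH_onP [_ [_ [_ [Pc [P2 [P3 P4]]]]]] H00 Hi0 [j [Hj1 Hj2]].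
apply/SH_onP; do !split => //.
- by move=> x _; rewrite vO vT; have := ltn_ord x; lia.
- move=> x y _ _; have [x0|xp] := posnP x; first by rewrite x0 !min0n.
  have [y0|yp] := posnP y; first by rewrite (ordO hn y0) Hi0.
  exact: P2.
- move=> x y z _ _ _; have [x0|xp] := posnP x; first by rewrite x0 !min0n.
  have [y0|yp] := posnP y; have [z0|zp] := posnP z.
  + by rewrite (ordO hn y0) (ordO hn z0) mnO.
  + rewrite (ordO hn y0) mnO; case: (leqP z x) => zx.
      by have -> : mn x z = z by apply: ordE; rewrite val_mn; lia.
    have -> : mn x z = x by apply: ordE; rewrite val_mn; lia.
    case: (leqP x j) => xj.
      have := Hj2 x; rewrite xp xj => /(_ isT) cx.
      case: (leqP z j) => zj.
        by have := Hj2 z; rewrite zp zj => /(_ isT); lia.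
      by rewrite Hj1 //; lia.
    by rewrite !Hj1 //; lia.
  + rewrite (ordO hn z0) mnO Hi0 // Hi0 ?val_mn; lia.
  + by apply: P3; rewrite /pos_part ?val_mn; lia.
- move=> x _; have [x0|xp] := posnP x; first by rewrite (ordO hn x0).
  exact: P4.
Qed.

Lemma card_fam n (F : 'I_n * 'I_n -> pred 'I_n) : #|family F| = \prod_x #|F x|.
Proof. by rewrite card_family foldrE big_map big_enum. Qed.

Lemma card_ge n (y : 'I_n) : #|(fun v : 'I_n => y <= v)| = n - y.
Proof.
rewrite -sum1_card (eq_bigl (fun v : 'I_n => y <= v)) //.
rewrite -(big_mkord (fun v => y <= v) (fun _ => 1)).
rewrite (@big_cat_nat _ _ _ y) ?(ltnW (ltn_ord y)) //=.
rewrite big_nat_cond big1 ?add0n; last by move=> i /andP[/andP[_ h1] h2]; lia.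
rewrite big_nat_cond (eq_bigl (fun i => (y <= i < n) && true)) -?big_nat_cond ?sum_nat_const_nat ?muln1 // => i; lia.
Qed.
Lemma prod_row n (j : nat) : j < n ->
  \prod_(y < n) (if (0 < y) && (y <= j) then n - y else 1) = (n.-1) ^_ j.
Proof.
elim: j => [_|j IH hj].
  by rewrite ffactn0 big1 // => y _; case: ifP => // /andP[]; lia.
rewrite ffactnSr -IH; last lia.
rewrite (eq_bigr (fun y : 'I_n => (if (0 < y) && (y <= j) then n - y else 1) *
     (if (y : nat) == j.+1 then n - y else 1))); last first.
  move=> y _; have [->|ne] := eqVneq (y : nat) j.+1.
    by rewrite /= leqnn ltnn mul1n.
  move/eqP: ne => ne; rewrite muln1; congr (if _ then _ else _).
  by apply/idP/idP => /andP[a b]; apply/andP; split; lia.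
rewrite big_split /=; congr (_ * _).
rewrite (bigD1 (Ordinal hj)) //= eqxx big1 ?muln1; first lia.
by move=> y ne; case: eqP => // h; case/eqP: ne; apply: val_inj.
Qed.

Lemma sum_rev n : 0 < n -> \sum_(j < n) (n.-1) ^_ j = \sum_(i < n) (n.-1)`! %/ i`!.
Proof.
move=> hn; rewrite (reindex_inj rev_ord_inj) /=; apply: eq_bigr => i _.
rewrite ffact_factd; last lia.
have -> : n.-1 - (n - i.+1) = i by have := ltn_ord i; lia.
by [].
Qed.

Definition G n (hn : 1 < n) (g : 'I_n -> 'I_n -> 'I_n) (j : 'I_n) (p : 'I_n * 'I_n)
  : pred 'I_n :=
  if (0 < p.1) && (0 < p.2) then (pred1 (g p.1 p.2) : pred 'I_n)
  else if 0 < p.1 then (pred1 (elt hn 0) : pred 'I_n)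
  else if 0 < p.2 then (if p.2 <= j then (fun v : 'I_n => p.2 <= v) else (pred1 j : pred 'I_n))
  else (pred1 (elt hn n.-1) : pred 'I_n).

Lemma card_G n (hn : 1 < n) g j p :
  #|G hn g j p| = if ~~ (0 < p.1) && (0 < p.2) && (p.2 <= j) then n - p.2 else 1.
Proof.
case: p => x y; rewrite /G /=.
case: (ltnP 0 x) => hx; case: (ltnP 0 y) => hy /=; rewrite ?card1 //.
by case: ifP => _; rewrite ?card1 ?card_ge.
Qed.

Lemma prod_G n (hn : 1 < n) g (j : 'I_n) : #|family (G hn g j)| = (n.-1) ^_ j.
Proof.
rewrite card_fam (eq_bigr _ (fun p _ => card_G hn g j p)).
rewrite -(pair_bigA _ (fun (x y : 'I_n) => if ~~ (0 < x) && (0 < y) && (y <= j) then n - y else 1)).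
rewrite (bigD1 (elt hn 0)) //= [X in _ * X]big1 ?muln1.
  by rewrite -(prod_row (ltn_ord j)); apply: eq_bigr => y _; rewrite mod0n.
move=> x ne; apply: big1 => y _.
have -> : 0 < x; last by [].
by rewrite lt0n; apply: contra ne => /eqP h; apply/eqP/val_inj; rewrite /= h mod0n.
Qed.

Lemma SHpos_ext n (b t : 'I_n) (g f : 'I_n -> 'I_n -> 'I_n) :
  SH_on (pos_part (n:=n)) b t g ->
  (forall x y : 'I_n, 0 < x -> 0 < y -> f x y = g x y) -> SH_on (pos_part (n:=n)) b t f.
Proof.
move=> /SH_onP [Sb [St [H1 [H2 [H3 [H4 H5]]]]]] E; apply/SH_onP.
do !split => //.
- by move=> x y hx hy; rewrite E //; apply: H2.
- by move=> x y hx hy; rewrite E //; apply: H3.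
- move=> x y z hx hy hz.
  have p1 : 0 < mn x y by rewrite val_mn; rewrite /pos_part in hx hy hz; lia.
  have p2 : 0 < mn x z by rewrite val_mn; rewrite /pos_part in hx hy hz; lia.
  by rewrite !E //; apply: H4.
- by move=> x hx; rewrite E // H5.
Qed.

Lemma rowG n (hn : 1 < n) g j (f : {ffun 'I_n * 'I_n -> 'I_n}) :
  f \in family (G hn g j) -> forall h : 'I_n, 0 < h ->
  (h <= j -> h <= f (elt hn 0, h)) /\ (j < h -> f (elt hn 0, h) = j).
Proof.
move=> /familyP Hf h hh; have := Hf (elt hn 0, h); rewrite /G /= mod0n hh /=.
case: ifP => hj.
  rewrite unfold_in /= => H; split => [_|hjh]; first exact: H.
  by move: hj hjh; lia.
rewrite inE => /eqP ->; split => // hjh; by move: hj hjh; lia.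
Qed.

Lemma famU n (hn : 1 < n) g j j' (f : {ffun 'I_n * 'I_n -> 'I_n}) :
  f \in family (G hn g j) -> f \in family (G hn g j') -> j = j'.
Proof.
move=> F1 F2; have R1 := rowG F1; have R2 := rowG F2.
case: (ltngtP j j') => h; last by apply: val_inj.
  have [a _] := R2 j' (leq_ltn_trans (leq0n _) h).
  have [_ b] := R1 j' (leq_ltn_trans (leq0n _) h).
  have := a (leqnn _); rewrite b //; lia.
have [a _] := R1 j (leq_ltn_trans (leq0n _) h).
have [_ b] := R2 j (leq_ltn_trans (leq0n _) h).
have := a (leqnn _); rewrite b //; lia.
Qed.

Lemma memS n (hn : 1 < n) g
  (Hg : SH_on (pos_part (n:=n)) (elt hn 1) (elt hn n.-1) g)
  (f : {ffun 'I_n * 'I_n -> 'I_n}) :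
  SH_on predT (elt hn 0) (elt hn n.-1) (fun x y => f (x, y)) &&
  [forall x : 'I_n, forall y : 'I_n, (0 < x) && (0 < y) ==> (f (x, y) == g x y)]
  = [exists j, f \in family (G hn g j)].
Proof.
apply/idP/existsP.
  case/andP => /part1 [_ H00 Hi0 [j [Hj1 Hj2]]] /forallP Hag.
  exists j; apply/familyP => -[x y]; rewrite /G /=.
  case: (ltnP 0 x) => hx; case: (ltnP 0 y) => hy /=.
  - by rewrite inE; have := forallP (Hag x) y; rewrite hx hy.
  - have -> : y = elt hn 0 by apply: ordO; lia.
    by rewrite inE Hi0.
  - have -> : x = elt hn 0 by apply: ordO; lia.
    case: ifP => hyj.
      by rewrite unfold_in /=; apply: Hj2; rewrite hy hyj.
    by rewrite inE Hj1 //; lia.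
  - have -> : x = elt hn 0 by apply: ordO; lia.
    have -> : y = elt hn 0 by apply: ordO; lia.
    by rewrite inE H00.
case=> j Hf; have R := rowG Hf; move/familyP: Hf => Hf.
have Hag : forall x y : 'I_n, 0 < x -> 0 < y -> f (x, y) = g x y.
  by move=> x y hx hy; have := Hf (x, y); rewrite /G /= hx hy inE => /eqP.
apply/andP; split; last first.
  by apply/forallP => x; apply/forallP => y; apply/implyP => /andP[hx hy]; rewrite Hag.
apply/part1; split.
- by apply: SHpos_ext Hg _ => x y hx hy; exact: Hag.
- by have := Hf (elt hn 0, elt hn 0); rewrite /G /= mod0n /= inE => /eqP.
- by move=> i hi; have := Hf (i, elt hn 0); rewrite /G /= mod0n hi /= inE => /eqP.
- exists j; split.
    by move=> h hh; have [_ ->] := R h (leq_ltn_trans (leq0n _) hh).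
  by move=> h /andP[h1 hj]; have [a _] := R h h1; exact: a hj.
Qed.

Lemma cardS n (hn : 1 < n) g
  (Hg : SH_on (pos_part (n:=n)) (elt hn 1) (elt hn n.-1) g) :
    #|[pred f : {ffun 'I_n * 'I_n -> 'I_n} |
        SH_on predT (elt hn 0) (elt hn n.-1) (fun x y => f (x, y)) &&
        [forall x : 'I_n, forall y : 'I_n, (0 < x) && (0 < y) ==> (f (x, y) == g x y)]]|
    = \sum_(j < n) #|family (G hn g j)|.
Proof.
rewrite -sum1_card.
rewrite (eq_bigr (fun f => \sum_(j | f \in family (G hn g j)) 1)); last first.
  move=> f; rewrite inE memS // => /existsP [j Hj].
  rewrite (bigD1 j) //= big1 // => j' /andP[Hj' ne].
  by case/eqP: ne; exact: famU Hj' Hj.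
rewrite (exchange_big_dep xpredT) //=.
apply: eq_bigr => j _; rewrite -sum1_card; apply: eq_bigl => f.
apply/andP/idP => [[]|h] //; split => //.
by rewrite inE memS //; apply/existsP; exists j.
Qed.

Theorem mainTheorem2 (n : nat) (hn : 1 < n) :
  (forall imp : 'I_n -> 'I_n -> 'I_n,
    SH_on predT (elt hn 0) (elt hn n.-1) imp <->
    [/\ SH_on (pos_part (n:=n)) (elt hn 1) (elt hn n.-1) imp,
        imp (elt hn 0) (elt hn 0) = elt hn n.-1,
        (forall i : 'I_n, 1 <= i -> imp i (elt hn 0) = elt hn 0) &
        (exists j : 'I_n,
           (forall h : 'I_n, j < h -> imp (elt hn 0) h = j) /\
           (forall h : 'I_n, 1 <= h <= j -> h <= imp (elt hn 0) h))])
  /\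
  (forall g : 'I_n -> 'I_n -> 'I_n,
    SH_on (pos_part (n:=n)) (elt hn 1) (elt hn n.-1) g ->
    #|[pred f : {ffun 'I_n * 'I_n -> 'I_n} |
        SH_on predT (elt hn 0) (elt hn n.-1) (fun x y => f (x, y)) &&
        [forall x : 'I_n, forall y : 'I_n, (0 < x) && (0 < y) ==> (f (x, y) == g x y)]]|
    = \sum_(i < n) (n.-1)`! %/ i`!).
Proof.
split; first exact: part1.
move=> g Hg; rewrite cardS // (eq_bigr _ (fun j _ => prod_G hn g j)) sum_rev //.
by apply: ltnW.
Qed.
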